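(* Let $T$ be a Borel automorphism of a separable metric space $(X,\rho)$ and let $\mathfrak{s}=\{h_1,\dots,h_n\}$ be a nontrivial primitive signature. Then for every $\varepsilon>0$ there exist Borel subsets $B_1,\dots,B_n\subset X$ such that: (1) the towers $\mathcal{R}_{h_i}[B_i]$, $i=1,\dots,n$, are full and pairwise disjoint; (2) $T$ maps the set $\bigcup_{i=1}^n\bar{\mathcal{R}}_{h_i}[B_i]$ bijectively onto itself; (3) for every $\mu\in M_{\mathrm{ap}}(X,T)$, $$\sum_{i=1}^n\mu\big(\bar{\mathcal{R}}_{h_i}[B_i]\big)=1,\qquad \sum_{i=1}^n\mu(B_i)<\tfrac12+\varepsilon.$$
   Context: A Borel automorphism is an invertible map with $T$ and $T^{-1}$ Borel measurable. $M_{\mathrm{ap}}(X,T)$ is the set of $T$-invariant Borel probability measures on $X$ giving measure zero to the set of $T$-periodic points. A signature is a finite nonempty set $\mathfrak{s}\subset\mathbb{N}$ of positive integers; it is primitive if its elements are jointly coprime, and trivial if $\mathfrak{s}=\{1\}$. For a Borel set $B\subset X$, the Rokhlin tower with base $B$ is the sequence of sets $B_0=B$, $B_k=TB_{k-1}\setminus B_0$ ($k\ge1$); for $h\in\mathbb{N}$ the tower $\mathcal{R}_h[B]$ of height $h$ consists of the levels $B_0,\dots,B_{h-1}$, and $\bar{\mathcal{R}}_h[B]=\bigcup_{k=0}^{h-1}B_k$. The tower $\mathcal{R}_h[B]$ is full if $B_k=T^kB$ for $k=0,\dots,h-1$ (and the levels are pairwise disjoint). Two towers are disjoint if their unions $\bar{\mathcal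 R}$ are disjoint. *)

(* Defs.v *)
From HB Require Import structures.
From mathcomp Require Import all_boot all_order all_algebra.
From mathcomp Require Import all_classical all_reals all_analysis.
Set Implicit Arguments. Unset Strict Implicit. Unset Printing Implicit Defensive.
Import Order.TTheory GRing.Theory Num.Theory.
Local Open Scope classical_set_scope.
Local Open Scope ring_scope.

Section Defs.
Context {R : realType} {X : Type}.

Definition is_metric (rho : X -> X -> R) : Prop :=
  [/\ forall x y, 0 <= rho x y,
      forall x y, rho x y = 0 <-> x = y,
      forall x y, rho x y = rho y x &
      forall x y z, rho x z <= rho x y + rho y z].

Definition rho_open (rho : X -> X -> R) (A : set X) : Prop :=
  forall x, A x -> exists2 r : R, 0 < r & [set y | rho x y < r] `<=` A.

Definition rho_separable (rho : X -> X -> R) : Prop :=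
  exists D : set X, countable D /\
    forall x (e : R), 0 < e -> exists2 y, D y & rho x y < e.

End Defs.

Section Towers.
Context {X : Type}.

Fixpoint tower_level (T : X -> X) (B : set X) (k : nat) : set X :=
  match k with
  | 0 => B
  | k'.+1 => (T @` tower_level T B k') `\` B
  end.

Definition tower_union (T : X -> X) (B : set X) (h : nat) : set X :=
  \bigcup_(k in [set k : nat | (k < h)%N]) tower_level T B k.

Definition tower_full (T : X -> X) (B : set X) (h : nat) : Prop :=
  (forall k, (k < h)%N -> tower_level T B k = (iter k T) @` B) /\
  (forall k l, (k < h)%N -> (l < h)%N -> k <> l ->
     tower_level T B k `&` tower_level T B l = set0).

Definition periodic_points (T : X -> X) : set X :=
  [set x | exists2 n : nat, (0 < n)%N & iter n T x = x].

End Towers.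

Definition borel_automorphism d (X : measurableType d) (T : X -> X) : Prop :=
  exists Tinv : X -> X, [/\ cancel T Tinv, cancel Tinv T,
     measurable_fun setT T & measurable_fun setT Tinv].

Definition M_ap d (X : measurableType d) (R : realType) (T : X -> X)
  (mu : probability X R) : Prop :=
  (forall A, measurable A -> mu (T @^-1` A) = mu A) /\
  mu (periodic_points T) = 0%E.

(* Main.v *)
Require Import Defs.
From HB Require Import structures.
From mathcomp Require Import all_boot all_order all_algebra.
From mathcomp Require Import all_classical all_reals all_analysis.
From mathcomp Require Import zify lra.
Import Order.TTheory GRing.Theory Num.Theory.
Local Open Scope classical_set_scope.
Local Open Scope ring_scope.
Set Implicit Arguments. Unset Strict Implicit. Unset Printing Implicit Defensive.

Section Blocks.
Local Open Scope nat_scope.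
Variables (n : nat) (h : 'I_n -> nat).
Hypothesis hpos : forall i, (0 < h i)%N.

Definition hsum (L : seq 'I_n) := sumn (map h L).

Fixpoint locate (L : seq 'I_n) (o : nat) : option ('I_n * nat) :=
  match L with
  | [::] => None
  | i :: L' => if (o < h i)%N then Some (i, o) else locate L' (o - h i)
  end.

Lemma locate_some L o : (o < hsum L)%N -> exists p, locate L o = Some p.
Proof.
elim: L o => [|i L IH] o /=; rewrite /hsum /=; first by [].
case: ifP => [_|]; first by eauto.
move=> /negbT; rewrite -leqNgt => hle ho; apply: IH; rewrite /hsum; lia.
Qed.

Lemma locate_spec L o i k : locate L o = Some (i, k) ->
  [/\ (k < h i)%N, (k <= o)%N & (o - k + h i <= hsum L)%N].
Proof.
elim: L o => [|j L IH] o //=; rewrite /hsum /=.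
case: ifP => [ho [<- <-]|].
  split => //; lia.
move=> /negbT; rewrite -leqNgt => hle /IH [h1 h2 h3]; split => //; rewrite /hsum in h3; lia.
Qed.

Lemma locate_succ L o i k : locate L o = Some (i, k) -> (k.+1 < h i)%N ->
  locate L o.+1 = Some (i, k.+1).
Proof.
elim: L o => [|j L IH] o //=.
case: ifP => [ho [<- <-] hk|]; first by rewrite hk.
move=> /negbT; rewrite -leqNgt => hle /IH H /H.
have -> : (o.+1 < h j)%N = false by apply/negbTE; rewrite -leqNgt; lia.
by have -> : (o.+1 - h j = (o - h j).+1)%N by lia.
Qed.

Lemma locate_pred L o i k j : locate L o = Some (i, k) -> (j <= k)%N ->
  locate L (o - j) = Some (i, k - j).
Proof.
elim: L o => [|c L IH] o //=.
case: ifP => [ho [<- <-] hk|].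
  by have -> : (o - j < h c)%N by lia.
move=> /negbT; rewrite -leqNgt => hle Hl hjk.
have [_ hko _] := locate_spec Hl.
have -> : (o - j < h c)%N = false by apply/negbTE; rewrite -leqNgt; lia.
have -> : (o - j - h c = o - h c - j)%N by lia.
exact: IH.
Qed.

Lemma locate_cat L1 L2 o : (hsum L1 <= o)%N ->
  locate (L1 ++ L2) o = locate L2 (o - hsum L1).
Proof.
elim: L1 o => [|c L IH] o /=; rewrite /hsum /=; first by rewrite subn0.
move=> hle.
have -> : (o < h c)%N = false by apply/negbTE; rewrite -leqNgt; lia.
rewrite IH /hsum; last lia.
by congr locate; lia.
Qed.

Lemma locate_nseq q i0 o i k : locate (nseq q i0) o = Some (i, k) -> i = i0.
Proof.
elim: q o => [|q IH] o //=.
case: ifP => [_ [<-]//|_]; exact: IH.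
Qed.

Lemma hsum_cat L1 L2 : hsum (L1 ++ L2) = (hsum L1 + hsum L2)%N.
Proof. by rewrite /hsum map_cat sumn_cat. Qed.

Lemma hsum_nseq q i : hsum (nseq q i) = (h i * q)%N.
Proof. by rewrite /hsum map_nseq sumn_nseq. Qed.

Variable i0 : 'I_n.

Lemma rep_mod : forall x, exists L, hsum L = (x * \big[gcdn/0%N]_(i < n) h i)%N %[mod h i0].
Proof.
elim/big_rec: _ => [|i g _ IH] x.
  by exists [::]; rewrite muln0.
have [a _ /dvdnP [u Hu]] := Bezoutl g (hpos i).
have [L' HL'] := IH (x * a * (h i0).-1)%N.
exists (nseq (x * u) i ++ L').
rewrite hsum_cat hsum_nseq -modnDmr HL' modnDmr.
have hi0 := hpos i0.
have -> : (h i * (x * u) + x * a * (h i0).-1 * g = x * gcdn (h i) g + (x * a * g) * h i0)%N.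
  have : (x * (u * h i) = x * (gcdn (h i) g + a * g))%N by rewrite Hu.
  have E : h i0 = ((h i0).-1).+1 by lia.
  rewrite {2}E; nia.
by rewrite addnC modnMDl.
Qed.

End Blocks.

Section BE.
Local Open Scope nat_scope.
Lemma blocks_exist n (h : 'I_n -> nat) (hpos : forall i, (0 < h i)%N)
  (Hprim : \big[gcdn/0%N]_(i < n) h i = 1%N) (i0 : 'I_n) (hi0 : (1 < h i0)%N) :
  exists (K : nat) (L : nat -> seq 'I_n),
    (forall m, (K <= m)%N -> hsum h (L m) = m) /\
    (forall m o i, locate h (L m) o = Some (i, 0%N) -> (h i < 2)%N -> (o < K)%N).
Proof.
have H r : exists L, hsum h L = r %[mod h i0].
  by have [L HL] := rep_mod hpos i0 r; exists L; rewrite HL Hprim muln1.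
pose Lr r := projT1 (cid (H r)).
have HLr r : hsum h (Lr r) = r %[mod h i0] := projT2 (cid (H r)).
have hp : (0 < h i0)%N by lia.
pose M := (\max_(r < h i0) hsum h (Lr r))%N.
have HM m : (hsum h (Lr (m %% h i0)) <= M)%N.
  exact: (@leq_bigmax _ (fun r : 'I_(h i0) => hsum h (Lr r)) (Ordinal (ltn_pmod m hp))).
exists M.+1, (fun m => Lr (m %% h i0) ++ nseq ((m - hsum h (Lr (m %% h i0))) %/ h i0) i0).
split.
  move=> m hm; rewrite hsum_cat hsum_nseq.
  set y := hsum h (Lr (m %% h i0)).
  have hy : (y <= m)%N by have := HM m; rewrite -/y; lia.
  have : h i0 %| m - y.
    by rewrite -eqn_mod_dvd // /y HLr modn_mod.
  move=> /divnK; rewrite mulnC => ->; lia.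
move=> m o i; set y := hsum h (Lr (m %% h i0)) => Hl hi.
have := HM m; rewrite -/y => hyM.
case: (ltnP o y) => hoy; first lia.
rewrite locate_cat // in Hl.
by move: (locate_nseq Hl) => E; rewrite E in hi; lia.
Qed.
End BE.


Lemma ex_min (P : nat -> Prop) : (exists n, P n) ->
  exists n, P n /\ forall m, (m < n)%N -> ~ P m.
Proof.
move=> [k Pk].
have ex : exists k, (fun k => `[< P k >]) k by exists k; apply/asboolP.
case: (ex_minnP ex) => m /asboolP Pm minm; exists m; split => // j jm Pj.
have := minm j (introT (asboolP _) Pj); lia.
Qed.

Section Orbits.
Local Open Scope nat_scope.
Variables (X : Type) (T Ti : X -> X).
Hypotheses (TK : cancel T Ti) (TiK : cancel Ti T).

Lemma iterTK k x : iter k T (iter k Ti x) = x.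
Proof. by elim: k x => [|k IH] x //; rewrite (iterSr k T) /= TiK IH. Qed.

Lemma iterTiK k x : iter k Ti (iter k T x) = x.
Proof. by elim: k x => [|k IH] x //; rewrite (iterSr k Ti) /= TK IH. Qed.

Lemma iterT_Ti a c x : a <= c -> iter a T (iter c Ti x) = iter (c - a) Ti x.
Proof.
move=> ac; have -> : c = a + (c - a) by lia.
by rewrite iterD iterTK; congr iter; lia.
Qed.

Lemma iterTi_T a c x : a <= c -> iter a Ti (iter c T x) = iter (c - a) T x.
Proof.
move=> ac; have -> : c = a + (c - a) by lia.
by rewrite iterD iterTiK; congr iter; lia.
Qed.

Variables (S : set X) (N : nat).
Hypothesis gap : forall x j, S x -> 0 < j < N -> ~ S (iter j T x).

Definition Cbf b f x :=
  [/\ S (iter b Ti x), (forall c, c < b -> ~ S (iter c Ti x)), 0 < f,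
      S (iter f T x) & (forall c, 0 < c < f -> ~ S (iter c T x))].

Lemma Cbf_uniq b f b' f' x : Cbf b f x -> Cbf b' f' x -> b = b' /\ f = f'.
Proof.
move=> [h1 h2 h3 h4 h5] [g1 g2 g3 g4 g5]; split.
  case: (ltngtP b b') => // hb; [by case: (g2 _ hb)|by case: (h2 _ hb)].
case: (ltngtP f f') => // hf; [by case: (g5 f) => //; lia|by case: (h5 f') => //; lia].
Qed.

Lemma Cbf_T b f x : Cbf b f x -> 1 < f -> Cbf b.+1 f.-1 (T x).
Proof.
move=> [h1 h2 h3 h4 h5] hf; split.
- by rewrite iterSr TK.
- case=> [|c] hc; first by apply: (h5 1) => //; lia.
  by rewrite iterSr TK; apply: h2.
- lia.
- by rewrite -iterSr prednK //; lia.
- move=> c hc; rewrite -iterSr; apply: h5; lia.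
Qed.


Lemma Cbf_Ti b f x : Cbf b f x -> 0 < b -> Cbf b.-1 f.+1 (Ti x).
Proof.
move=> [h1 h2 h3 h4 h5] hb; split.
- by rewrite -iterSr prednK.
- move=> c hc; rewrite -iterSr; apply: h2; lia.
- lia.
- by rewrite iterSr TiK.
- case=> [|[|c]] hc //; first by rewrite /= TiK; apply: (h2 0).
  by rewrite iterSr TiK; apply: h5; lia.
Qed.

Lemma Cbf_ge b f x : Cbf b f x -> N <= b + f.
Proof.
move=> [h1 h2 h3 h4 h5]; case: (leqP N (b + f)) => // hlt.
have := gap h1 (j := f + b); rewrite iterD iterTK; move/(_ _ h4); lia.
Qed.

Variables (n : nat) (h : 'I_n -> nat) (L : nat -> seq 'I_n).
Hypothesis HL : forall m, N <= m -> hsum h (L m) = m.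

Definition Lev i k := [set x | exists b f, Cbf b f x /\ locate h (L (b + f)) b = Some (i, k)].

Lemma Lev_lt i k x : Lev i k x -> k < h i.
Proof. by move=> [b [f [_ /locate_spec []]]]. Qed.

Lemma Lev_uniq i k j l x : Lev i k x -> Lev j l x -> i = j /\ k = l.
Proof.
move=> [b [f [C1 E1]]] [b' [f' [C2 E2]]].
have [? ?] := Cbf_uniq C1 C2; subst b' f'; rewrite E1 in E2; by case: E2.
Qed.

Lemma Lev_T i k x : Lev i k x -> k.+1 < h i -> Lev i k.+1 (T x).
Proof.
move=> [b [f [C E]]] hk.
have [h1 h2 h3] := locate_spec E.
have := Cbf_ge C => /HL hm; rewrite hm in h3.
have hf : 1 < f by lia.
exists b.+1, f.-1; split; first exact: Cbf_T.
have -> : b.+1 + f.-1 = b + f by lia.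
exact: locate_succ.
Qed.

Lemma Lev_Ti i k x : Lev i k.+1 x -> Lev i k (Ti x).
Proof.
move=> [b [f [C E]]].
have [h1 h2 h3] := locate_spec E.
exists b.-1, f.+1; split; first by apply: Cbf_Ti => //; lia.
have -> : b.-1 + f.+1 = b + f by lia.
have := locate_pred E (j := 1) isT.
have -> : b - 1 = b.-1 by lia.
by have -> : k.+1 - 1 = k by lia.
Qed.

Lemma Lev_image i k : k.+1 < h i -> T @` Lev i k = Lev i k.+1.
Proof.
move=> hk; apply/seteqP; split.
  by move=> _ [x Hx <-]; exact: Lev_T.
by move=> y Hy; exists (Ti y); [exact: Lev_Ti|rewrite TiK].
Qed.

Lemma Lev_iter i k : k < h i -> iter k T @` Lev i 0 = Lev i k.
Proof.
elim: k => [|k IH] hk.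
  by apply/seteqP; split => [_ [x Hx <-]//|x Hx]; exists x.
rewrite -Lev_image; last by [].
rewrite -IH; last lia.
apply/seteqP; split.
  by move=> _ [x Hx <-]; exists (iter k T x) => //; exists x.
by move=> _ [_ [x Hx <-] <-]; exists x.
Qed.

Lemma Lev_level i k : k < h i -> tower_level T (Lev i 0) k = Lev i k.
Proof.
elim: k => [|k IH] hk //=.
rewrite IH; last lia.
rewrite Lev_image //.
apply/seteqP; split => [x [] //|x Hx]; split => // H0.
by have [_] := Lev_uniq Hx H0.
Qed.

Lemma S_Ti_disj j l x : j < l < N -> S (iter j Ti x) -> S (iter l Ti x) -> False.
Proof.
move=> hjl Sj Sl.
have := gap Sl (j := l - j); rewrite iterT_Ti; last lia.
have -> : l - (l - j) = j by lia.
move/(_ _ Sj); lia.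
Qed.

Definition G := [set x | forall j, 0 < j < N -> iter j T x <> x].

Lemma G_T x : G (T x) <-> G x.
Proof.
split => Hx j hj E.
  by apply: (Hx j hj); rewrite -iterSr iterS E.
by apply: (Hx j hj); apply: (can_inj TK); rewrite -iterS iterSr.
Qed.

Lemma G_iterT k x : G x -> G (iter k T x).
Proof. by elim: k => [|k IH] //= /IH /G_T. Qed.

Lemma G_Ti x : G x -> G (Ti x).
Proof. by move=> Hx; apply/G_T; rewrite TiK. Qed.

Lemma G_iterTi k x : G x -> G (iter k Ti x).
Proof. by elim: k => [|k IH] //= /IH /G_Ti. Qed.

Lemma G_image : T @` G = G.
Proof.
apply/seteqP; split; first by move=> _ [x Hx <-]; apply/G_T.
by move=> y Hy; exists (Ti y); [exact: G_Ti|rewrite TiK].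
Qed.

Hypothesis SG : S `<=` G.
Hypothesis cover : forall x, G x -> exists j, j < N /\ (S (iter j T x) \/ S (iter j Ti x)).

Lemma G_Cbf x : G x -> exists b f, Cbf b f x.
Proof.
move=> Gx.
have [f [[hf0 hf] hfmin]] : exists f, (0 < f /\ S (iter f T x)) /\
    forall m, m < f -> ~ (0 < m /\ S (iter m T x)).
  apply: ex_min.
  have [j [hj [H|H]]] := cover (G_iterT (k:=N) Gx).
    by exists (j + N); split; [lia|rewrite iterD].
  by exists (N - j); split; [lia|rewrite -iterTi_T //; lia].
have [b [hb hbmin]] : exists b, S (iter b Ti x) /\ forall m, m < b -> ~ S (iter m Ti x).
  apply: ex_min.
  have [j [hj [H|H]]] := cover (G_iterTi (k:=N) Gx).
    by exists (N - j); rewrite -iterT_Ti //; lia.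
  by exists (j + N); rewrite iterD.
exists b, f; split => // c hc Sc; apply: (hfmin c); [lia|split => //; lia].
Qed.

Lemma Cbf_G b f x : Cbf b f x -> G x.
Proof. by move=> [/SG /(G_iterT (k:=b))]; rewrite iterTK. Qed.

Lemma Lev_G i k x : Lev i k x -> G x.
Proof. by move=> [b [f [C _]]]; exact: Cbf_G C. Qed.

Lemma G_Lev x : G x -> exists i k, k < h i /\ Lev i k x.
Proof.
move=> /G_Cbf [b [f C]].
have hm := HL (Cbf_ge C).
have [hf] : 0 < f by case: C.
have [[i k] E] : exists p, locate h (L (b + f)) b = Some p.
  by apply: locate_some; rewrite hm; lia.
exists i, k; split; first by have [] := locate_spec E.
by exists b, f.
Qed.

Variable K : nat.
Hypothesis HLs : forall m o i, locate h (L m) o = Some (i, 0) -> h i < 2 -> o < K.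

Lemma Lev_small i x : Lev i 0 x -> h i < 2 -> exists b, b < K /\ S (iter b Ti x).
Proof.
move=> [b [f [C E]]] hi; exists b; split; first exact: HLs E hi.
by case: C.
Qed.

End Orbits.


Lemma min_pos (R : realType) (F : nat -> R) M :
  (forall j, (0 < j < M)%N -> 0 < F j) ->
  exists2 e, 0 < e & forall j, (0 < j < M)%N -> e <= F j.
Proof.
elim: M => [|M IH] HF.
  by exists 1 => // j; lia.
have [e e0 He] : exists2 e, 0 < e & forall j, (0 < j < M)%N -> e <= F j.
  by apply: IH => j hj; apply: HF; lia.
case: (posnP M) => [->|hM].
  by exists 1 => // j; lia.
have FM : 0 < F M by apply: HF; lia.
exists (Num.min e (F M)); first by rewrite lt_min e0 FM.
move=> j hj; case: (ltnP j M) => hjM.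
  by rewrite ge_min He //; lia.
have -> : j = M by lia.
by rewrite ge_min lexx orbT.
Qed.

Section Marker.
Variables (R : realType) (d : measure_display) (X : measurableType d).
Variables (rho : X -> X -> R).
Hypotheses (rho_ge0 : forall x y, 0 <= rho x y) (rho_eq0 : forall x y, rho x y = 0 <-> x = y)
  (rho_sym : forall x y, rho x y = rho y x) (rho_tri : forall x y z, rho x z <= rho x y + rho y z).
Hypothesis Hborel : @measurable d X = <<s rho_open rho >>.
Variables (D : set X) (en : nat -> X).
Hypothesis Hdense : forall x (e : R), 0 < e -> exists2 y, D y & rho x y < e.
Hypothesis HDen : D `<=` range en.
Variables (T Ti : X -> X).
Hypotheses (TK : cancel T Ti) (TiK : cancel Ti T).
Hypotheses (mT : measurable_fun setT T) (mTi : measurable_fun setT Ti).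

Definition rr (k : nat) : R := (k.+1%:R)^-1.

Lemma rr_gt0 k : 0 < rr k.
Proof. by rewrite /rr invr_gt0 ltr0n. Qed.

Lemma rr_small e : 0 < e -> exists k, rr k < e.
Proof.
move=> e0; exists (Num.truncn e^-1); rewrite /rr -[X in _ < X]invrK ltf_pV2 ?posrE ?invr_gt0 ?ltr0n //.
exact: truncnS_gt.
Qed.

Definition ball a k := [set z | rho (en a) z < rr k].

Lemma sep x e : 0 < e -> exists a k, ball a k x /\ forall z, ball a k z -> rho x z < e.
Proof.
move=> e0; have [k hk] := rr_small (divr_gt0 e0 (ltr0n _ 2)).
have [y Dy hy] := Hdense x (rr_gt0 k).
have [a _ ea] := HDen Dy.
exists a, k; split; first by rewrite /ball /= ea rho_sym.
move=> z; rewrite /ball /= ea => hz.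
have := rho_tri x y z; lra.
Qed.

Lemma open_meas A : rho_open rho A -> measurable A.
Proof. by move=> HA; rewrite Hborel; exact: sub_sigma_algebra. Qed.

Lemma ball_meas a k : measurable (ball a k).
Proof.
apply: open_meas => y hy.
exists (rr k - rho (en a) y); first by rewrite /ball /= in hy; lra.
move=> z /= hz; rewrite /ball /=; have := rho_tri (en a) y z; lra.
Qed.

Lemma mpre (f : X -> X) (mf : measurable_fun setT f) Y : measurable Y -> measurable (f @^-1` Y).
Proof. by move=> mY; rewrite -[_ @^-1` _]setTI; exact: mf. Qed.

Lemma miter (f : X -> X) (mf : measurable_fun setT f) k : measurable_fun setT (iter k f).
Proof.
elim: k => [|k IH]; first exact: measurable_id.
have -> : iter k.+1 f = f \o iter k f by apply: funext.
exact: measurableT_comp.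
Qed.

Lemma mpreT k Y : measurable Y -> measurable (iter k T @^-1` Y).
Proof. exact/mpre/miter. Qed.

Lemma mpreTi k Y : measurable Y -> measurable (iter k Ti @^-1` Y).
Proof. exact/mpre/miter. Qed.

Lemma fix_meas (f : X -> X) (mf : measurable_fun setT f) :
  measurable [set x | f x = x].
Proof.
have -> : [set x | f x = x] = ~` \bigcup_(a in setT) \bigcup_(k in setT)
    (ball a k `&` f @^-1` (~` ball a k)).
  apply/seteqP; split.
    by move=> x /= E [a _ [k _ [B1 B2]]]; apply: B2; rewrite /= E.
  move=> x /= H; case: (pselect (f x = x)) => // Hn; exfalso.
  have hp : 0 < rho x (f x).
    rewrite lt_def rho_ge0 andbT; apply/eqP => /rho_eq0 E; exact: Hn.
  have [a [k [Bx Hz]]] := @sep x _ hp.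
  apply: H; exists a => //; exists k => //; split => //= Bf.
  by have := Hz _ Bf; rewrite ltxx.
apply: measurableC; apply: bigcup_measurable => a _; apply: bigcup_measurable => k _.
apply: measurableI; first exact: ball_meas.
by apply: mpre => //; apply: measurableC; exact: ball_meas.
Qed.

Lemma periodic_meas : measurable (periodic_points T).
Proof.
have -> : periodic_points T = \bigcup_(k in [set k | (0 < k)%N]) [set x | iter k T x = x].
  by apply/seteqP; split => x [k hk E]; exists k.
by apply: bigcup_measurable => k _; apply: fix_meas; exact: miter.
Qed.

Variable N : nat.

Definition Amark (p : nat) : set X :=
  match unpickle p : option (nat * nat) with
  | Some (a, k) => ball a k `\` \bigcup_(j in [set j | (0 < j < N)%N]) (iter j T @^-1` ball a k)
  | None => set0
  end.

Lemma Amark_meas p : measurable (Amark p).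
Proof.
rewrite /Amark; case: unpickle => [[a k]|//].
apply: measurableD; first exact: ball_meas.
by apply: bigcup_measurable => j _; apply: mpreT; exact: ball_meas.
Qed.

Lemma Amark_gap p x j : Amark p x -> (0 < j < N)%N -> ~ Amark p (iter j T x).
Proof.
rewrite /Amark; case: unpickle => [[a k]|//] [_ H] hj [B _].
by apply: H; exists j.
Qed.

Lemma Amark_G p x : Amark p x -> G T N x.
Proof.
rewrite /Amark; case: unpickle => [[a k]|//] [Bx H] j hj E.
by apply: H; exists j => //; rewrite /= E.
Qed.

Lemma Amark_cover x : G T N x -> exists p, Amark p x.
Proof.
move=> Gx.
have [e e0 He] : exists2 e, 0 < e & forall j, (0 < j < N)%N -> e <= rho x (iter j T x).
  apply: min_pos => j hj; rewrite lt_def rho_ge0 andbT.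
  by apply/eqP => /rho_eq0 E; apply: (Gx j hj).
have [a [k [Bx Hz]]] := @sep x _ e0.
exists (pickle (a, k)); rewrite /Amark pickleK; split => // -[j hj Bj].
by have := Hz _ Bj; have := He j hj; lra.
Qed.

Definition Near (Y : set X) : set X :=
  \bigcup_(j in [set j | (j < N)%N]) (iter j T @^-1` Y `|` iter j Ti @^-1` Y).

Lemma Near_meas Y : measurable Y -> measurable (Near Y).
Proof.
move=> mY; apply: bigcup_measurable => j _.
by apply: measurableU; [apply: mpreT|apply: mpreTi].
Qed.

Fixpoint Sg (p : nat) : set X :=
  match p with
  | 0 => set0
  | p'.+1 => Sg p' `|` (Amark p' `\` Near (Sg p'))
  end.

Definition Smark := \bigcup_p Sg p.

Lemma Sg_meas p : measurable (Sg p).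
Proof.
elim: p => [|p IH] //=; apply: measurableU => //.
by apply: measurableD; [exact: Amark_meas|exact: Near_meas].
Qed.

Lemma Smark_meas : measurable Smark.
Proof. exact: bigcupT_measurable Sg_meas. Qed.

Lemma Sg_mono p q : (p <= q)%N -> Sg p `<=` Sg q.
Proof.
move=> /subnK <-; elim: (q - p)%N => [|m IH] //= x Hx; left; exact: IH.
Qed.

Lemma Sg_gap p x j : Sg p x -> (0 < j < N)%N -> ~ Sg p (iter j T x).
Proof.
elim: p x => [|p IH] x //= Hx hj Hy.
case: Hx => [Hx|[Ax NAx]]; case: Hy => [Hy|[Ay NAy]].
- exact: IH Hx hj Hy.
- apply: NAy; exists j; first by move: hj => /andP [].
  by right; rewrite /= iterTiK.
- apply: NAx; exists j; first by move: hj => /andP [].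
  by left.
- exact: Amark_gap Ax hj Ay.
Qed.

Lemma Smark_gap x j : Smark x -> (0 < j < N)%N -> ~ Smark (iter j T x).
Proof.
move=> [p _ Hp] hj [q _ Hq].
apply: (@Sg_gap (maxn p q) x j) => //.
  by apply: (Sg_mono (leq_maxl p q)).
by apply: (Sg_mono (leq_maxr p q)).
Qed.

Lemma Sg_G p : Sg p `<=` G T N.
Proof.
elim: p => [|p IH] x //= [Hx|[Ax _]]; [exact: IH|exact: Amark_G Ax].
Qed.

Lemma Smark_G : Smark `<=` G T N.
Proof. by move=> x [p _ Hp]; exact: Sg_G Hp. Qed.

Lemma Smark_cover x : (0 < N)%N -> G T N x ->
  exists j, (j < N)%N /\ (Smark (iter j T x) \/ Smark (iter j Ti x)).
Proof.
move=> N0 Gx; have [p Ap] := Amark_cover Gx.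
case: (pselect (Near (Sg p) x)) => [[j hj [H|H]]|Hn].
- by exists j; split => //; left; exists p.
- by exists j; split => //; right; exists p.
- by exists 0%N; split => //; left; exists p.+1 => //=; right.
Qed.

End Marker.


Lemma bigsetU_mem (I : eqType) (Y : Type) (r : seq I) (P : pred I) (F : I -> set Y) x :
  (\big[setU/set0]_(i <- r | P i) F i) x <-> exists i, [/\ i \in r, P i & F i x].
Proof.
elim: r => [|a r IH]; first by rewrite big_nil; split => // -[i []].
rewrite big_cons; case: ifP => Pa; split.
- case=> [Fa|/IH [i [ir Pi Fi]]]; first by exists a; rewrite mem_head.
  by exists i; rewrite in_cons ir orbT.
- move=> [i []]; rewrite in_cons => /orP [/eqP ->|ir] Pi Fi; first by left.
  by right; apply/IH; exists i.
- by move=> /IH [i [ir Pi Fi]]; exists i; rewrite in_cons ir orbT.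
- move=> [i []]; rewrite in_cons => /orP [/eqP ->|ir] Pi Fi; first by rewrite Pa in Pi.
  by apply/IH; exists i.
Qed.

Lemma bigsetU_ord_mem (Y : Type) n (P : pred 'I_n) (F : 'I_n -> set Y) x :
  (\big[setU/set0]_(i < n | P i) F i) x <-> exists i, P i /\ F i x.
Proof.
rewrite bigsetU_mem; split => [[i [_ Pi Fi]]|[i [Pi Fi]]]; first by exists i.
by exists i; split => //; rewrite mem_index_enum.
Qed.

Section Meas.
Variables (d : measure_display) (X : measurableType d) (T Ti : X -> X).
Hypotheses (mT : measurable_fun setT T) (mTi : measurable_fun setT Ti).
Variables (S : set X) (mS : measurable S).

Lemma mpre' (f : X -> X) (mf : measurable_fun setT f) Y : measurable Y -> measurable (f @^-1` Y).
Proof. by move=> mY; rewrite -[_ @^-1` _]setTI; exact: mf. Qed.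

Lemma miter' (f : X -> X) (mf : measurable_fun setT f) k : measurable_fun setT (iter k f).
Proof.
elim: k => [|k IH]; first exact: measurable_id.
have -> : iter k.+1 f = f \o iter k f by apply: funext.
exact: measurableT_comp.
Qed.

Lemma Cbf_meas b f : measurable [set x | Cbf T Ti S b f x].
Proof.
case: (posnP f) => [->|f0].
  by have -> : [set x | Cbf T Ti S b 0 x] = set0 by apply/seteqP; split => // x [].
have -> : [set x | Cbf T Ti S b f x] =
    iter b Ti @^-1` S `&` ~` (\bigcup_(c in [set c | (c < b)%N]) iter c Ti @^-1` S)
    `&` iter f T @^-1` S `&` ~` (\bigcup_(c in [set c | (0 < c < f)%N]) iter c T @^-1` S).
  apply/seteqP; split => x.
    move=> [h1 h2 h3 h4 h5]; split; [split; [split => //|]|] => //.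
      by move=> [c hc Sc]; exact: h2 hc Sc.
    by move=> [c hc Sc]; exact: h5 hc Sc.
  move=> [[[h1 h2] h4] h5]; split => //.
    by move=> c hc Sc; apply: h2; exists c.
  by move=> c hc Sc; apply: h5; exists c.
apply: measurableI; last first.
  by apply: measurableC; apply: bigcup_measurable => c _; apply: mpre'; [exact: miter'|].
apply: measurableI; last by apply: mpre'; [exact: miter'|].
apply: measurableI; first by apply: mpre'; [exact: miter'|].
by apply: measurableC; apply: bigcup_measurable => c _; apply: mpre'; [exact: miter'|].
Qed.

Lemma Lev_meas n (h : 'I_n -> nat) L i k : measurable (Lev T Ti S h L i k).
Proof.
have -> : Lev T Ti S h L i k = \bigcup_(b in setT)
    \bigcup_(f in [set f | locate h (L (b + f)%N) b = Some (i, k)]) [set x | Cbf T Ti S b f x].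
  apply/seteqP; split => x.
    by move=> [b [f [C E]]]; exists b => //; exists f.
  by move=> [b _ [f E C]]; exists b, f.
by apply: bigcup_measurable => b _; apply: bigcup_measurable => f _; exact: Cbf_meas.
Qed.

End Meas.


Lemma sum_const_ord (R : realType) (x : R) k : \sum_(i < k) x = x *+ k.
Proof. by rewrite sumr_const card_ord. Qed.

Unset Implicit Arguments.
Theorem lemma2 (R : realType) (d : measure_display) (X : measurableType d)
  (rho : X -> X -> R)
  (Hmetric : is_metric rho) (Hsep : rho_separable rho)
  (Hborel : @measurable d X = <<s rho_open rho >>)
  (T : X -> X) (HT : borel_automorphism T)
  (n : nat) (h : 'I_n -> nat)
  (Hn : (0 < n)%N) (Hinj : injective h) (Hpos : forall i, (0 < h i)%N)
  (Hprim : \big[gcdn/0%N]_(i < n) h i = 1%N)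
  (Hnontriv : exists i, h i <> 1%N)
  (eps : R) (Heps : 0 < eps) :
  exists B : 'I_n -> set X,
    [/\ forall i, measurable (B i),
        forall i, tower_full T (B i) (h i),
        forall i j, i <> j ->
          tower_union T (B i) (h i) `&` tower_union T (B j) (h j) = set0,
        T @` (\bigcup_(i in setT) tower_union T (B i) (h i))
          = \bigcup_(i in setT) tower_union T (B i) (h i) &
        forall mu : probability X R, M_ap T mu ->
          (\sum_(i < n) mu (tower_union T (B i) (h i)) = 1)%E /\
          (\sum_(i < n) mu (B i) < (2^-1 + eps)%:E)%E ].
Proof.
case: Hmetric => rho_ge0 rho_eq0 rho_sym rho_tri.
case: HT => Ti [TK TiK mT mTi].
case: Hsep => D [cD Hdense].
move: cD => /pcard_surjP [en Hen].
have HDen : D `<=` range en by [].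
have [i0 hi0] : exists i0, (1 < h i0)%N.
  by case: Hnontriv => i hi; exists i; have := Hpos i; lia.
have [K [L [HLsum HLs]]] := blocks_exist Hpos Hprim hi0.
pose N := (K + (Num.truncn (K%:R / eps)).+1)%N.
have KN : (K <= N)%N by rewrite /N; lia.
have N0 : (0 < N)%N by rewrite /N; lia.
have HNeps : K%:R < eps * N%:R.
  rewrite mulrC -ltr_pdivrMr //.
  apply: (lt_le_trans (truncnS_gt _)); by rewrite ler_nat /N addnS ltnS leq_addl.
pose S := Smark rho en T Ti N.
have mS : measurable S by apply: Smark_meas; try eassumption.
have gap : forall x j, S x -> (0 < j < N)%N -> ~ S (iter j T x).
  by move=> x j; apply: Smark_gap; try eassumption.
have SG : S `<=` G T N by apply: Smark_G; try eassumption.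
have cover : forall x, G T N x -> exists j, (j < N)%N /\ (S (iter j T x) \/ S (iter j Ti x)).
  by move=> x; apply: Smark_cover; try eassumption.
have HL : forall m, (N <= m)%N -> hsum h (L m) = m.
  by move=> m hm; apply: HLsum; lia.
pose B i := Lev T Ti S h L i 0.
have tuE : forall i, tower_union T (B i) (h i) = \bigcup_(k in [set k | (k < h i)%N]) Lev T Ti S h L i k.
  move=> i; apply/seteqP; split => x [k hk Hx]; exists k => //.
    by rewrite -(Lev_level TK TiK gap HL hk).
  by rewrite (Lev_level TK TiK gap HL hk).
have UE : \bigcup_(i in setT) tower_union T (B i) (h i) = G T N.
  apply/seteqP; split => x.
    by move=> [i _]; rewrite tuE => -[k hk Hx]; exact: Lev_G Hx.
  move=> /(G_Lev TK TiK gap HL cover) [i [k [hk Hx]]].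
  by exists i => //; rewrite tuE; exists k.
exists B; split.
- by move=> i; apply: Lev_meas.
- move=> i; split.
    by move=> k hk; rewrite (Lev_level TK TiK gap HL hk) (Lev_iter TK TiK gap HL hk).
  move=> k l hk hl hkl; rewrite (Lev_level TK TiK gap HL hk) (Lev_level TK TiK gap HL hl).
  by apply/seteqP; split => // x [H1 H2]; have [_ E] := Lev_uniq H1 H2.
- move=> i j hij; rewrite !tuE; apply/seteqP; split => // x [[k _ H1] [l _ H2]].
  by have [E _] := Lev_uniq H1 H2.
- by rewrite UE (G_image TK TiK).
move=> mu [Hinv Hper].
have miT k Y : measurable Y -> measurable (iter k Ti @^-1` Y).
  by move=> mY; apply: mpre' => //; exact: miter'.
have invTi Y : measurable Y -> mu (Ti @^-1` Y) = mu Y.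
  move=> mY; rewrite -(Hinv _ (mpre' mTi mY)); congr (mu _).
  by apply/seteqP; split => x /=; rewrite TK.
have invTin k Y : measurable Y -> mu (iter k Ti @^-1` Y) = mu Y.
  elim: k Y => [|k IH] Y mY //.
  have -> : iter k.+1 Ti @^-1` Y = iter k Ti @^-1` (Ti @^-1` Y) by [].
  by rewrite IH ?invTi //; exact: mpre'.
have imgT A : T @` A = Ti @^-1` A.
  apply/seteqP; split => [_ [x Ax <-]|y Ay]; first by rewrite /= TK.
  by exists (Ti y); rewrite ?TiK.
have mB i : measurable (B i) by apply: Lev_meas.
have mTU i : measurable (tower_union T (B i) (h i)).
  by rewrite tuE; apply: bigcup_measurable => k _; apply: Lev_meas.
have GE : G T N = ~` \bigcup_(j in [set j | (0 < j < N)%N]) [set x | iter j T x = x].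
  apply/seteqP; split => x.
    by move=> Gx [j hj E]; exact: Gx j hj E.
  by move=> H j hj E; apply: H; exists j.
have mG : measurable (G T N).
  rewrite GE; apply: measurableC; apply: bigcup_measurable => j _.
  by apply: fix_meas; try eassumption; exact: miter'.
have muG : mu (G T N) = 1%E.
  have H0 : mu (~` G T N) = 0%E.
    apply: (subset_measure0 (B := periodic_points T)) => //.
    - exact: measurableC.
    - by apply: periodic_meas; eassumption.
    - by rewrite GE setCK => x [j /andP [hj _] E]; exists j.
  have := probability_setC mu (measurableC mG); rewrite setCK H0 => /esym.
  have fG : mu (G T N) \is a fin_num by rewrite fin_num_measure.
  rewrite -(fineK fG) -EFinB => /eqP; rewrite eqe => /eqP E; congr (_%:E); lra.
have fin A : measurable A -> mu A = (fine (mu A))%:E.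
  by move=> mA; rewrite fineK // fin_num_measure.
split.
  have tTU : trivIset setT (fun i => tower_union T (B i) (h i)).
    move=> i j _ _ [x []]; rewrite !tuE => -[k _ H1] [l _ H2].
    by have [] := Lev_uniq H1 H2.
  rewrite -(measure_bigsetU_ord mu (fun=> true) mTU tTU) -muG; congr (mu _).
  apply/seteqP; split => x.
    by move/bigsetU_ord_mem => [i [_ Hx]]; rewrite -UE; exists i.
  by rewrite -UE => -[i _ Hx]; apply/bigsetU_ord_mem; exists i.
pose P := \big[setU/set0]_(i < n | (1 < h i)%N) B i.
pose Q := \big[setU/set0]_(i < n | ~~ (1 < h i)%N) B i.
have tB : trivIset setT B.
  by move=> i j _ _ [x [H1 H2]]; have [] := Lev_uniq H1 H2.
have mP : measurable P by apply: bigsetU_measurable => i _.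
have mQ : measurable Q by apply: bigsetU_measurable => i _.
have sumE : (\sum_(i < n) mu (B i) = mu P + mu Q)%E.
  by rewrite (bigID (fun i => (1 < h i)%N)) /= !measure_bigsetU_ord.
have PQ : P `&` Q = set0.
  apply/seteqP; split => // x [/bigsetU_ord_mem [i [hi Hi]] /bigsetU_ord_mem [j [hj Hj]]].
  by have [E _] := Lev_uniq Hi Hj; subst j; rewrite hi in hj.
have TP : (P `|` Q) `&` T @` P = set0.
  apply/seteqP; split => // y [Hy [x /bigsetU_ord_mem [i [hi Hi]] Ey]].
  rewrite -Ey in Hy.
  have H1 := Lev_T TK TiK gap HL Hi hi.
  have [j Hj] : exists j, B j (T x).
    by case: Hy => /bigsetU_ord_mem [j [_ Hj]]; exists j.
  by have [_ E] := Lev_uniq H1 Hj.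
have mTP : measurable (T @` P) by rewrite imgT; exact: mpre'.
have muTP : mu (T @` P) = mu P by rewrite imgT invTi.
have le1 : (mu P + mu Q + mu P <= 1)%E.
  rewrite -{2}muTP -(measureU mu mP mQ PQ) -(measureU mu (measurableU _ _ mP mQ) mTP TP).
  by apply: probability_le1; apply: measurableU => //; apply: measurableU.
pose W := \big[setU/set0]_(b < K) (fun b : nat => iter b Ti @^-1` S) b.
have QW : Q `<=` W.
  move=> x /bigsetU_ord_mem [i [hi Hi]].
  have hi2 : (h i < 2)%N by move: hi; rewrite -leqNgt.
  have [b [hb Sb]] := Lev_small HLs Hi hi2.
  by apply/bigsetU_ord_mem; exists (Ordinal hb).
have mW : measurable W by apply: bigsetU_measurable => b _; exact: miT.
have muQ : (mu Q <= \sum_(b < K) mu S)%E.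
  apply: (le_trans (le_measure mu _ _ QW)); rewrite ?inE //.
  apply: (le_trans (Boole_inequality mu _)) => [b _|]; first exact: miT.
  by rewrite le_eqVlt; apply/orP; left; apply/eqP; apply: eq_bigr => b _; rewrite /= invTin.
have muN : (\sum_(j < N) mu S <= 1)%E.
  pose F := fun j : nat => iter j Ti @^-1` S.
  have h1 : forall k, (k < N)%N -> measurable (F k) by move=> k _; exact: miT.
  have h2 : trivIset `I_N F.
    move=> j l hj hl [x [Hj Hl]]; case: (ltngtP j l) => // hjl; exfalso.
      by apply: (S_Ti_disj TiK gap (j := j) (l := l) (x := x)) => //; rewrite hjl.
    by apply: (S_Ti_disj TiK gap (j := l) (l := j) (x := x)) => //; rewrite hjl.
  have h3 : measurable (\big[setU/set0]_(k < N) F k).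
    by apply: bigsetU_measurable => k _; exact: miT.
  have := measure_semi_additive_ord_I mu h1 h2 h3.
  have -> : (\sum_(j < N) mu (F j) = \sum_(j < N) mu S)%E.
    by apply: eq_bigr => k _; rewrite /F invTin.
  move=> <-; exact: probability_le1.
have s0 : 0 <= fine (mu S) by apply: fine_ge0.
rewrite sumE (fin _ mP) (fin _ mQ) -EFinD lte_fin.
rewrite (fin _ mP) (fin _ mQ) -!EFinD lee_fin in le1.
rewrite (fin _ mQ) (fin _ mS) sumEFin lee_fin sum_const_ord -mulr_natr in muQ.
rewrite (fin _ mS) sumEFin lee_fin sum_const_ord -mulr_natr in muN.
move: le1 muQ muN HNeps s0.
set p := fine (mu P); set q := fine (mu Q); set s := fine (mu S).
have N0' : 0 < (N%:R : R) by rewrite ltr0n.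
move=> le1 muQ muN HNeps s0.
have hq : q * N%:R < eps * N%:R.
  apply: (le_lt_trans _ HNeps).
  have : s * N%:R * K%:R <= K%:R by rewrite ler_piMl // ler0n.
  have : q * N%:R <= s * K%:R * N%:R by rewrite ler_pM2r.
  lra.
move: hq; rewrite ltr_pM2r // => hq.
lra.
Qed.
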